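(* Let $L$ be a totally ordered multiplicative lattice and $m$ a positive integer. (1) If $\{q_\lambda\}_{\lambda\in\Lambda}$ is a family of quasi $m$-absorbing elements of $L$, then $\bigwedge_{\lambda\in\Lambda}q_\lambda$ is a quasi $m$-absorbing element of $L$. (2) If $\{q_\lambda\}_{\lambda\in\Lambda}$ is a family of weakly quasi $m$-absorbing elements of $L$, then $\bigwedge_{\lambda\in\Lambda}q_\lambda$ is a weakly quasi $m$-absorbing element of $L$.
   Context: A multiplicative lattice is a complete lattice $L$ with least element $0$ and compact greatest element $1$, equipped with a commutative, associative product that distributes over arbitrary joins and has $1$ as multiplicative identity; $L$ is totally ordered if any two elements are comparable. An element $a$ is compact if $a\le\bigvee_{\alpha\in I}a_\alpha$ implies $a\le\bigvee_{\alpha\in I_0}a_\alpha$ for some finite $I_0\subseteq I$; $L_*$ denotes the set of compact elements. $a^0=1$. A proper element $q$ ($q<1$) is quasi $m$-absorbing if whenever $a^mb\le q$ for some $a,b\in L_*$, then $a^m\le q$ or $a^{m-1}b\le q$; it is weakly quasi $m$-absorbing if whenever $0\ne a^mb\le q$ for some $a,b\in L_*$, then $a^m\le q$ or $a^{m-1}b\le q$. *)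

(* Defs.v *)
From Stdlib Require Import List.

(* A complete lattice is given by a partial order [le] on [T] together with
   a supremum operator [sup] on arbitrary subsets (predicates) of [T]. *)
Section MultLattice.
Variable T : Type.
Variable le : T -> T -> Prop.
Variable sup : (T -> Prop) -> T.
Variable mul : T -> T -> T.

Definition lzero : T := sup (fun _ => False).
Definition lone : T := sup (fun _ => True).
Definition inf_fam (I : Type) (f : I -> T) : T :=
  sup (fun x => forall i, le x (f i)).

Definition compact (a : T) : Prop :=
  forall S : T -> Prop, le a (sup S) ->
    exists l : list T, (forall x, In x l -> S x) /\ le a (sup (fun x => In x l)).

Record is_mult_lattice : Prop := {
  le_refl : forall a, le a a;
  le_trans : forall a b c, le a b -> le b c -> le a c;
  le_antisym : forall a b, le a b -> le b a -> a = b;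
  sup_ub : forall (S : T -> Prop) a, S a -> le a (sup S);
  sup_least : forall (S : T -> Prop) b, (forall a, S a -> le a b) -> le (sup S) b;
  one_compact : compact lone;
  mulC : forall a b, mul a b = mul b a;
  mulA : forall a b c, mul a (mul b c) = mul (mul a b) c;
  mul1 : forall a, mul lone a = a;
  mul_sup : forall a (S : T -> Prop),
      mul a (sup S) = sup (fun y => exists x, S x /\ y = mul a x)
}.

Definition totally_ordered : Prop := forall a b, le a b \/ le b a.

Fixpoint lpow (a : T) (n : nat) : T :=
  match n with
  | O => lone
  | S k => mul a (lpow a k)
  end.

Definition proper (q : T) : Prop := le q lone /\ q <> lone.

Definition quasi_m_absorbing (m : nat) (q : T) : Prop :=
  proper q /\
  forall a b, compact a -> compact b ->
    le (mul (lpow a m) b) q ->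
    le (lpow a m) q \/ le (mul (lpow a (m - 1)) b) q.

Definition weakly_quasi_m_absorbing (m : nat) (q : T) : Prop :=
  proper q /\
  forall a b, compact a -> compact b ->
    mul (lpow a m) b <> lzero -> le (mul (lpow a m) b) q ->
    le (lpow a m) q \/ le (mul (lpow a (m - 1)) b) q.

End MultLattice.

(* Main.v *)
Require Import Defs.

Theorem mainTheorem7
  (T : Type) (le : T -> T -> Prop) (sup : (T -> Prop) -> T) (mul : T -> T -> T)
  (HL : is_mult_lattice T le sup mul) (Htot : totally_ordered T le)
  (m : nat) (hm : 0 < m) :
  (forall (Lam : Type) (q : Lam -> T), inhabited Lam ->
     (forall l, quasi_m_absorbing T le sup mul m (q l)) ->
     quasi_m_absorbing T le sup mul m (inf_fam T le sup Lam q))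
  /\
  (forall (Lam : Type) (q : Lam -> T), inhabited Lam ->
     (forall l, weakly_quasi_m_absorbing T le sup mul m (q l)) ->
     weakly_quasi_m_absorbing T le sup mul m (inf_fam T le sup Lam q)).
Proof.
  destruct HL as [le_refl0 le_trans0 le_antisym0 sup_ub0 sup_least0 one_compact0 mulC0 mulA0 mul10 mul_sup0].
  assert (Hlb : forall Lam (q : Lam -> T) l, le (inf_fam T le sup Lam q) (q l)).
  { intros. unfold inf_fam. apply sup_least0. intros a Ha. apply Ha. }
  assert (Hglb : forall Lam (q : Lam -> T) x, (forall l, le x (q l)) -> le x (inf_fam T le sup Lam q)).
  { intros. unfold inf_fam. apply sup_ub0. exact H. }
  assert (Hone : forall x, le x (lone T sup)).
  { intros. unfold lone. apply sup_ub0. exact I. }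
  assert (Hprop : forall Lam (q : Lam -> T), inhabited Lam -> (forall l, proper T le sup (q l)) ->
            proper T le sup (inf_fam T le sup Lam q)).
  { intros Lam q [l0] Hp. split. apply Hone. intro E.
    destruct (Hp l0) as [_ Hne]. apply Hne. apply le_antisym0. apply Hone.
    rewrite <- E. apply Hlb. }
  assert (Key : forall Lam (q : Lam -> T) x y,
            (forall l, le x (q l) \/ le y (q l)) ->
            le x (inf_fam T le sup Lam q) \/ le y (inf_fam T le sup Lam q)).
  { intros Lam q x y H. destruct (Htot x y) as [Hxy|Hyx].
    - left. apply Hglb. intro l. destruct (H l). assumption. eauto.
    - right. apply Hglb. intro l. destruct (H l). eauto. assumption. }
  split.
  - intros Lam q Hi Hq. split.
    + apply Hprop; [exact Hi| intro l; apply (Hq l)].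
    + intros a b ca cb Hab. apply Key. intro l. apply (proj2 (Hq l)); auto.
      eapply le_trans0; [exact Hab| apply Hlb].
  - intros Lam q Hi Hq. split.
    + apply Hprop; [exact Hi| intro l; apply (Hq l)].
    + intros a b ca cb Hz Hab. apply Key. intro l. apply (proj2 (Hq l)); auto.
      eapply le_trans0; [exact Hab| apply Hlb].
Qed.
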